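(* Let $\mathbb F$ be a field, $q\in\mathbb F$, $f,g\in\mathbb F[h]$. Then $\operatorname{GKdim}\mathcal H_q(f,g)=3$ if and only if $\deg f\le 1$. Moreover, if $\deg f>1$ then $\operatorname{GKdim}\mathcal H_q(f,g)\ge 4$.
   Context: $\mathcal H_q(f,g)$ denotes the unital associative $\mathbb F$-algebra generated by $x,y,h$ with relations $hx=xf(h)$, $yh=f(h)y$, $yx-qxy=g(h)$ (quantum generalized Heisenberg algebra). $\operatorname{GKdim}$ is Gelfand–Kirillov dimension. (Here $\deg f\le 1$ includes constant $f$.) *)

(* Defs.v *)
From HB Require Import structures.
From mathcomp Require Import all_boot all_order all_algebra.
From mathcomp Require Import all_classical all_reals all_analysis.
From mathcomp Require Import Rstruct Rstruct_topology.
Set Implicit Arguments. Unset Strict Implicit. Unset Printing Implicit Defensive.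
Import Order.TTheory GRing.Theory Num.Theory.
Local Open Scope ring_scope.

(* Words in the three letters x = 0, y = 1, h = 2.  An element of the free
   algebra F<x,y,h> is a finitely supported function word -> F; we work with
   arbitrary functions word -> F (formal series), on which the concatenation
   (Cauchy) product is well defined, and only ever apply it to polynomials. *)
Definition word := seq 'I_3.
Definition lx : 'I_3 := inord 0.
Definition ly : 'I_3 := inord 1.
Definition lh : 'I_3 := inord 2.

Section FreeAlg.
Variable F : fieldType.

Definition nser := word -> F.

Definition mon (w : word) : nser := fun v => (v == w)%:R.

Definition nmul (p q : nser) : nser :=
  fun w => \sum_(i < (size w).+1) p (take i w) * q (drop i w).

Definition nsub (p q : nser) : nser := fun w => p w - q w.
Definition nscale (c : F) (p : nser) : nser := fun w => c * p w.

Definition pol_h (p : {poly F}) : nser :=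
  fun w => if all (fun a => a == lh) w then p`_(size w) else 0.

(* defining relations of H_q(f,g):
   hx - x f(h),  yh - f(h) y,  yx - q xy - g(h) *)
Definition qgh_rel (q : F) (f g : {poly F}) (k : 'I_3) : nser :=
  if val k == 0%N then nsub (mon [:: lh; lx]) (nmul (mon [:: lx]) (pol_h f))
  else if val k == 1%N then nsub (mon [:: ly; lh]) (nmul (pol_h f) (mon [:: ly]))
  else nsub (nsub (mon [:: ly; lx]) (nscale q (mon [:: lx; ly]))) (pol_h g).

Definition in_qgh_ideal (q : F) (f g : {poly F}) (p : nser) : Prop :=
  exists s : seq (F * word * 'I_3 * word),
    forall w, p w = \sum_(t <- s)
      t.1.1.1 * nmul (nmul (mon t.1.1.2) (qgh_rel q f g t.1.2)) (mon t.2) w.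

Definition indep_words (q : F) (f g : {poly F}) (n k : nat) : Prop :=
  exists ws : k.-tuple word,
    (forall i, size (tnth ws i) <= n)%N /\
    forall c : 'I_k -> F,
      in_qgh_ideal q f g (fun w => \sum_(i < k) c i * mon (tnth ws i) w) ->
      forall i, c i = 0.

(* dim_F V^n where V = F1 + Fx + Fy + Fh (image in H_q(f,g)); V^n is spanned
   by the images of the words of length <= n, of which there are < 3^(n+1). *)
Definition qgh_growth (q : F) (f g : {poly F}) (n : nat) : nat :=
  \max_(k < (3 ^ n.+1).+1 | `[< indep_words q f g n k >]) k.

Definition GKdim_qgh (q : F) (f g : {poly F}) : \bar Rdefinitions.R :=
  limn_esup (fun n => ((ln (qgh_growth q f g n)%:R / ln n%:R : Rdefinitions.R))%:E).

End FreeAlg.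

(* Main.v *)
Require Import Defs.
From HB Require Import structures.
From mathcomp Require Import all_boot all_order all_algebra.
From mathcomp Require Import all_classical all_reals all_analysis.
From mathcomp Require Import Rstruct Rstruct_topology.
From mathcomp Require Import zify ring lra.
Import Order.TTheory GRing.Theory Num.Theory.
Local Open Scope ring_scope.
Set Implicit Arguments. Unset Strict Implicit. Unset Printing Implicit Defensive.
Lemma catsI (T : Type) (u v w : seq T) : u ++ v = u ++ w -> v = w.
Proof. by elim: u => //= a u IH [] /IH. Qed.

Lemma catIs (T : eqType) (u v w : seq T) : v ++ u = w ++ u -> v = w.
Proof.
move=> h; have hs : size v = size w.
  by move: (congr1 size h); rewrite !size_cat => /eqP; rewrite eqn_add2r => /eqP.
by move/eqP: h; rewrite eqseq_cat // => /andP[/eqP].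
Qed.

Section Words.
Variable F : fieldType.
Implicit Types (p r : nser F) (u v w a b : word).

Definition L u p : nser F :=
  fun w => if take (size u) w == u then p (drop (size u) w) else 0.
Definition R u p : nser F :=
  fun w => if drop (size w - size u) w == u then p (take (size w - size u) w) else 0.

Lemma preP u w : reflect (exists v, w = u ++ v) (take (size u) w == u).
Proof.
apply: (iffP eqP) => [h|[v ->]]; last by rewrite take_size_cat.
by exists (drop (size u) w); rewrite -[X in X ++ _]h cat_take_drop.
Qed.

Lemma sufP u w : reflect (exists v, w = v ++ u) (drop (size w - size u) w == u).
Proof.
apply: (iffP eqP) => [h|[v ->]]; last by rewrite size_cat addnK drop_size_cat.
by exists (take (size w - size u) w); rewrite -[X in _ ++ X]h cat_take_drop.
Qed.

Lemma L_cat u p v : L u p (u ++ v) = p v.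
Proof. by rewrite /L take_size_cat // eqxx drop_size_cat. Qed.

Lemma L_out u p w : ~ (exists v, w = u ++ v) -> L u p w = 0.
Proof. by rewrite /L; case: preP. Qed.

Lemma R_cat u p v : R u p (v ++ u) = p v.
Proof. by rewrite /R size_cat addnK drop_size_cat // eqxx take_size_cat. Qed.

Lemma R_out u p w : ~ (exists v, w = v ++ u) -> R u p w = 0.
Proof. by rewrite /R; case: sufP. Qed.

Lemma monE v w : mon F v w = (w == v)%:R.
Proof. by []. Qed.

Lemma L_mon u v w : L u (mon F v) w = mon F (u ++ v) w.
Proof.
case: (preP u w) => [[d ->]|nh]; first by rewrite L_cat !monE eqseq_cat // eqxx.
rewrite L_out // monE; case: eqP => // e; case: nh; by exists v.
Qed.

Lemma R_mon u v w : R u (mon F v) w = mon F (v ++ u) w.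
Proof.
case: (sufP u w) => [[d ->]|nh].
  rewrite R_cat !monE (_ : (d ++ u == v ++ u) = (d == v)) //; by apply/idP/idP => /eqP H; apply/eqP; [exact: (catIs H)|rewrite H].
rewrite R_out // monE; case: eqP => // e; case: nh; by exists v.
Qed.

Lemma L_L u a p w : L u (L a p) w = L (u ++ a) p w.
Proof.
case: (preP u w) => [[v ->]|nh].
  rewrite L_cat; case: (preP a v) => [[z ->]|na].
    by rewrite L_cat catA L_cat.
  rewrite L_out // L_out // => -[z]; rewrite -catA => /catsI e; apply: na; by exists z.
rewrite L_out // L_out // => -[z e]; apply: nh; exists (a ++ z); by rewrite e catA.
Qed.

Lemma R_R u b p w : R u (R b p) w = R (b ++ u) p w.
Proof.
case: (sufP u w) => [[v ->]|nh].
  rewrite R_cat; case: (sufP b v) => [[z ->]|na].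
    by rewrite R_cat -catA R_cat.
  rewrite R_out // R_out // => -[z]; rewrite catA => /catIs e; apply: na; by exists z.
rewrite R_out // R_out // => -[z e]; apply: nh; exists (z ++ b); by rewrite e catA.
Qed.

Lemma L_R u b p w : L u (R b p) w = R b (L u p) w.
Proof.
case: (preP u w) => [[v ->]|nh].
  rewrite L_cat; case: (sufP b v) => [[z ->]|nb].
    by rewrite R_cat catA R_cat L_cat.
  rewrite R_out //; case: (sufP b (u ++ v)) => [[z e]|nb2]; last by rewrite R_out.
  rewrite e R_cat; case: (preP u z) => [[z' ez]|nz]; last by rewrite L_out.
  exfalso; apply: nb; exists z'; move: e; rewrite ez -catA; by move/catsI.
rewrite L_out //; case: (sufP b w) => [[z e]|nb2]; last by rewrite R_out.
rewrite e R_cat; case: (preP u z) => [[z' ez]|nz]; last by rewrite L_out.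
exfalso; apply: nh; exists (z' ++ b); by rewrite e ez catA.
Qed.

Lemma nmul_monl a p : nmul (mon F a) p = L a p.
Proof.
apply: funext => w; rewrite /nmul.
case: (preP a w) => [[v ->]|nh].
  have ha : (size a < (size (a ++ v)).+1)%N by rewrite size_cat ltnS leq_addr.
  rewrite (bigD1 (Ordinal ha)) //= take_size_cat // drop_size_cat // monE eqxx mul1r.
  rewrite big1 ?addr0 ?L_cat // => i /eqP ne; rewrite monE.
  case: eqP; last by rewrite mul0r.
  move=> e; exfalso; apply: ne; apply: val_inj => /=.
  have hi2 : (i <= size (a ++ v))%N by rewrite -ltnS ltn_ord.
  by move: (congr1 size e); rewrite size_takel.
rewrite L_out // big1 // => i _; rewrite monE; case: eqP; last by rewrite mul0r.
move=> e; exfalso; apply: nh; exists (drop i w); by rewrite -e cat_take_drop.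
Qed.

Lemma nmul_monr b p : nmul p (mon F b) = R b p.
Proof.
apply: funext => w; rewrite /nmul.
case: (sufP b w) => [[v ->]|nh].
  have ha : (size v < (size (v ++ b)).+1)%N by rewrite size_cat ltnS leq_addr.
  rewrite (bigD1 (Ordinal ha)) //= take_size_cat // drop_size_cat // monE eqxx mulr1.
  rewrite big1 ?addr0 ?R_cat // => i /eqP ne; rewrite monE.
  case: eqP; last by rewrite mulr0.
  move=> e; exfalso; apply: ne; apply: val_inj => /=.
  have hi : (i <= size v + size b)%N by rewrite -size_cat -ltnS ltn_ord.
  move: (congr1 size e); rewrite size_drop => e2.
  have e3 : (size v + size b - i = size b)%N by rewrite -size_cat.
  apply/eqP; lia.
rewrite R_out // big1 // => i _; rewrite monE; case: eqP; last by rewrite mulr0.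
move=> e; exfalso; apply: nh; exists (take i w); by rewrite -e cat_take_drop.
Qed.

End Words.
Lemma nseqSr (T : Type) (n : nat) (x : T) : nseq n.+1 x = nseq n x ++ [:: x].
Proof. by rewrite -addn1 nseqD. Qed.

Section Ideal.
Variable F : fieldType.
Variables (q : F) (f g : {poly F}).
Local Notation rel := (qgh_rel q f g).
Local Notation mon := (mon F).
Implicit Types (p r : nser F) (u v w a b : word).

Lemma L_ext u p r w : (forall v, p v = r v) -> L u p w = L u r w.
Proof. by move=> e; rewrite /L e. Qed.
Lemma R_ext u p r w : (forall v, p v = r v) -> R u p w = R u r w.
Proof. by move=> e; rewrite /R e. Qed.
Lemma L_sum (I : Type) (s : seq I) (G : I -> nser F) u w :
  L u (fun v => \sum_(i <- s) G i v) w = \sum_(i <- s) L u (G i) w.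
Proof. by rewrite /L; case: ifP => _ //; rewrite big1. Qed.
Lemma R_sum (I : Type) (s : seq I) (G : I -> nser F) u w :
  R u (fun v => \sum_(i <- s) G i v) w = \sum_(i <- s) R u (G i) w.
Proof. by rewrite /R; case: ifP => _ //; rewrite big1. Qed.
Lemma L_scale c p u w : L u (fun v => c * p v) w = c * L u p w.
Proof. by rewrite /L; case: ifP => _ //; rewrite mulr0. Qed.
Lemma R_scale c p u w : R u (fun v => c * p v) w = c * R u p w.
Proof. by rewrite /R; case: ifP => _ //; rewrite mulr0. Qed.
Lemma L_sub p r u w : L u (fun v => p v - r v) w = L u p w - L u r w.
Proof. by rewrite /L; case: ifP => _ //; rewrite subr0. Qed.
Lemma R_sub p r u w : R u (fun v => p v - r v) w = R u p w - R u r w.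
Proof. by rewrite /R; case: ifP => _ //; rewrite subr0. Qed.
Lemma L_nil p w : L [::] p w = p w.
Proof. by rewrite /L take0 drop0 eqxx. Qed.
Lemma R_nil p w : R [::] p w = p w.
Proof. by rewrite /R subn0 drop_size take_size eqxx. Qed.

Definition sand (t : F * word * 'I_3 * word) : nser F :=
  fun w => t.1.1.1 * R t.2 (L t.1.1.2 (rel t.1.2)) w.
Definition J p := exists s : seq (F * word * 'I_3 * word),
  forall w, p w = \sum_(t <- s) sand t w.

Lemma J_ideal p : in_qgh_ideal q f g p <-> J p.
Proof.
rewrite /in_qgh_ideal /J; split=> -[s hs]; exists s => w; rewrite hs;
  apply: eq_bigr => t _; by rewrite /sand nmul_monl nmul_monr.
Qed.

Lemma J_ext p r : J p -> (forall w, p w = r w) -> J r.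
Proof. move=> [s hs] e; exists s => w; by rewrite -e. Qed.
Lemma J0 : J (fun _ => 0). Proof. by exists [::] => w; rewrite big_nil. Qed.
Lemma JD p r : J p -> J r -> J (fun w => p w + r w).
Proof. move=> [s hs] [s' hs']; exists (s ++ s') => w; by rewrite big_cat hs hs'. Qed.
Lemma JZ c p : J p -> J (fun w => c * p w).
Proof.
move=> [s hs]; exists [seq (c * t.1.1.1, t.1.1.2, t.1.2, t.2) | t <- s] => w.
rewrite hs big_map mulr_sumr; apply: eq_bigr => t _; by rewrite /sand /= mulrA.
Qed.
Lemma JB p r : J p -> J r -> J (fun w => p w - r w).
Proof. move=> hp hr; apply: J_ext (JD hp (JZ (-1) hr)) _ => w; by rewrite mulN1r. Qed.
Lemma J_sumseq (I : Type) (s : seq I) (G : I -> nser F) :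
  (forall i, J (G i)) -> J (fun w => \sum_(i <- s) G i w).
Proof.
move=> hG; elim: s => [|i s IH]; first by apply: J_ext J0 _ => w; rewrite big_nil.
by apply: J_ext (JD (hG i) IH) _ => w; rewrite big_cons.
Qed.
Lemma JL u p : J p -> J (L u p).
Proof.
move=> [s hs]; exists [seq (t.1.1.1, u ++ t.1.1.2, t.1.2, t.2) | t <- s] => w.
rewrite (L_ext _ _ hs) L_sum big_map; apply: eq_bigr => t _.
by rewrite /sand /= L_scale L_R; congr (_ * _); apply: R_ext => v; rewrite L_L.
Qed.
Lemma JR u p : J p -> J (R u p).
Proof.
move=> [s hs]; exists [seq (t.1.1.1, t.1.1.2, t.1.2, t.2 ++ u) | t <- s] => w.
by rewrite (R_ext _ _ hs) R_sum big_map; apply: eq_bigr => t _; rewrite /sand /= R_scale R_R.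
Qed.
Lemma J_rel k : J (rel k).
Proof.
exists [:: (1, [::], k, [::])] => w; by rewrite big_cons big_nil addr0 /sand /= mul1r R_nil L_nil.
Qed.

Definition lin (s : seq (F * word)) : nser F := fun w => \sum_(t <- s) t.1 * mon t.2 w.
Definition Span (Q : word -> Prop) p :=
  exists s : seq (F * word), (forall t, t \in s -> Q t.2) /\ J (fun w => p w - lin s w).

Lemma span_ext Q p r : Span Q p -> (forall w, p w = r w) -> Span Q r.
Proof. move=> [s [hs hJ]] e; exists s; split => //; apply: J_ext hJ _ => w; by rewrite e. Qed.
Lemma span_mono (Q Q' : word -> Prop) p : (forall v, Q v -> Q' v) -> Span Q p -> Span Q' p.
Proof. move=> hQ [s [hs hJ]]; exists s; split => // t /hs; exact: hQ. Qed.
Lemma span_J Q p : J p -> Span Q p.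
Proof. move=> hJ; exists [::]; split => //; apply: J_ext hJ _ => w; by rewrite /lin big_nil subr0. Qed.
Lemma span_mon (Q : word -> Prop) v : Q v -> Span Q (mon v).
Proof.
move=> hv; exists [:: (1, v)]; split; first by move=> t; rewrite inE => /eqP ->.
apply: J_ext J0 _ => w; by rewrite /lin big_cons big_nil addr0 mul1r subrr.
Qed.
Lemma span_add Q p r : Span Q p -> Span Q r -> Span Q (fun w => p w + r w).
Proof.
move=> [s [hs hJ]] [s' [hs' hJ']]; exists (s ++ s'); split.
  by move=> t; rewrite mem_cat => /orP[/hs|/hs'].
apply: J_ext (JD hJ hJ') _ => w; rewrite /lin big_cat /=; ring.
Qed.
Lemma span_scale Q c p : Span Q p -> Span Q (fun w => c * p w).
Proof.
move=> [s [hs hJ]]; exists [seq (c * t.1, t.2) | t <- s]; split.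
  by move=> t /mapP[t' /hs ? ->].
apply: J_ext (JZ c hJ) _ => w; rewrite /lin big_map mulrBr mulr_sumr.
by congr (_ - _); apply: eq_bigr => t _ /=; rewrite mulrA.
Qed.
Lemma span_lin Q s : (forall t, t \in s -> Span Q (mon t.2)) -> Span Q (lin s).
Proof.
elim: s => [|t s IH] h.
  by apply: span_ext (span_J Q J0) _ => w; rewrite /lin big_nil.
have IH' : Span Q (lin s) by apply: IH => t' ht'; apply: h; rewrite inE ht' orbT.
apply: span_ext (span_add (span_scale t.1 (h t (mem_head _ _))) IH') _ => w.
by rewrite /lin big_cons.
Qed.
Lemma span_bind (P Q : word -> Prop) p :
  Span P p -> (forall v, P v -> Span Q (mon v)) -> Span Q p.
Proof.
move=> [s [hs hJ]] h.
have hl : Span Q (lin s) by apply: span_lin => t /hs; exact: h.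
by apply: span_ext (span_add (span_J Q hJ) hl) _ => w; rewrite subrK.
Qed.
Lemma span_L (Q : word -> Prop) u p :
  Span Q p -> Span (fun w => exists v, Q v /\ w = u ++ v) (L u p).
Proof.
move=> [s [hs hJ]]; exists [seq (t.1, u ++ t.2) | t <- s]; split.
  by move=> t /mapP[t' /hs ? ->]; exists t'.2.
apply: J_ext (JL u hJ) _ => w; rewrite L_sub; congr (_ - _).
rewrite /lin L_sum big_map; apply: eq_bigr => t _ /=; by rewrite L_scale L_mon.
Qed.
Lemma span_R (Q : word -> Prop) u p :
  Span Q p -> Span (fun w => exists v, Q v /\ w = v ++ u) (R u p).
Proof.
move=> [s [hs hJ]]; exists [seq (t.1, t.2 ++ u) | t <- s]; split.
  by move=> t /mapP[t' /hs ? ->]; exists t'.2.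
apply: J_ext (JR u hJ) _ => w; rewrite R_sub; congr (_ - _).
rewrite /lin R_sum big_map; apply: eq_bigr => t _ /=; by rewrite R_scale R_mon.
Qed.

End Ideal.
Lemma vlx : val lx = 0%N. Proof. by rewrite /lx /= inordK. Qed.
Lemma vly : val ly = 1%N. Proof. by rewrite /ly /= inordK. Qed.
Lemma vlh : val lh = 2%N. Proof. by rewrite /lh /= inordK. Qed.
Lemma case3 (l : 'I_3) : l = lx \/ l = ly \/ l = lh.
Proof.
case: l => [[|[|[|m]]] hm] //; [left|right;left|right;right]; apply: val_inj;
  by rewrite /= ?vlx ?vly ?vlh.
Qed.

Section Rewr.
Variable F : fieldType.
Variables (q : F) (f g : {poly F}).
Local Notation rel := (qgh_rel q f g).
Local Notation mon := (mon F).
Local Notation J := (J q f g).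
Local Notation Span := (Span q f g).
Implicit Types (p r : nser F) (u v w : word).

Lemma span_eq Q p r : (forall w, r w = p w) -> Span Q p -> Span Q r.
Proof. move=> e h; apply: span_ext h _ => w; by rewrite e. Qed.

Lemma pol_h_sum (p : {poly F}) w :
  pol_h p w = \sum_(i < size p) p`_i * mon (nseq i lh) w.
Proof.
rewrite /pol_h; case: ifP => hw.
  have e : w = nseq (size w) lh by apply/all_pred1P.
  case: (ltnP (size w) (size p)) => hs.
    rewrite (bigD1 (Ordinal hs)) //= big1 ?addr0; first by rewrite monE -e eqxx mulr1.
    move=> i /eqP ne; rewrite monE; case: eqP; last by rewrite mulr0.
    move=> e2; exfalso; apply: ne; apply: val_inj => /=; by rewrite e2 size_nseq.
  rewrite nth_default // big1 // => i _; rewrite monE; case: eqP; last by rewrite mulr0.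
  move=> e2; have := ltn_ord i; rewrite -[X in (X < _)%N](size_nseq i lh) -e2; lia.
rewrite big1 // => i _; rewrite monE; case: eqP; last by rewrite mulr0.
by move=> e2; move: hw; rewrite e2 all_nseq eqxx orbT.
Qed.

Lemma lin_iota (n : nat) (G : nat -> F) (W : nat -> word) w :
  lin [seq (G i, W i) | i <- index_iota 0 n] w = \sum_(i < n) G i * mon (W i) w.
Proof. by rewrite /lin big_map big_mkord. Qed.

Lemma mem_iota_map (n : nat) (G : nat -> F) (W : nat -> word) t :
  t \in [seq (G i, W i) | i <- index_iota 0 n] -> exists2 i, (i < n)%N & t.2 = W i.
Proof. by move=> /mapP[i]; rewrite mem_index_iota => /andP[_ hi] ->; exists i. Qed.

Lemma span_hx : Span (fun v => exists2 i, (i < size f)%N & v = lx :: nseq i lh) (mon [:: lh; lx]).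
Proof.
exists [seq (f`_i, lx :: nseq i lh) | i <- index_iota 0 (size f)]; split.
  by move=> t /mem_iota_map.
apply: J_ext (J_rel q f g lx) _ => w; rewrite /qgh_rel vlx /= /nsub nmul_monl lin_iota.
congr (_ - _); rewrite (L_ext _ _ (pol_h_sum f)) L_sum; apply: eq_bigr => i _.
by rewrite L_scale L_mon.
Qed.

Lemma span_yh : Span (fun v => exists2 i, (i < size f)%N & v = nseq i lh ++ [:: ly]) (mon [:: ly; lh]).
Proof.
exists [seq (f`_i, nseq i lh ++ [:: ly]) | i <- index_iota 0 (size f)]; split.
  by move=> t /mem_iota_map.
apply: J_ext (J_rel q f g ly) _ => w; rewrite /qgh_rel vly /= /nsub nmul_monr lin_iota.
congr (_ - _); rewrite (R_ext _ _ (pol_h_sum f)) R_sum; apply: eq_bigr => i _.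
by rewrite R_scale R_mon.
Qed.

Lemma span_yx : Span (fun v => v = [:: lx; ly] \/ exists2 i, (i < size g)%N & v = nseq i lh)
  (mon [:: ly; lx]).
Proof.
exists ((q, [:: lx; ly]) :: [seq (g`_i, nseq i lh) | i <- index_iota 0 (size g)]); split.
  move=> t; rewrite inE => /orP[/eqP -> /=|/mem_iota_map [i hi ->]]; first by left.
  by right; exists i.
apply: J_ext (J_rel q f g lh) _ => w; rewrite /qgh_rel vlh /= /nsub /nscale.
rewrite /lin big_cons big_map big_mkord pol_h_sum /=; ring.
Qed.

Hypothesis hf : (size f <= 2)%N.

Lemma span_hxa a : Span (fun v => v = nseq a lx \/ v = nseq a lx ++ [:: lh]) (mon (lh :: nseq a lx)).
Proof.
elim: a => [|a IH]; first by apply: span_mon; right.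
apply: (span_eq (p := R (nseq a lx) (mon [:: lh; lx]))); first by move=> w; rewrite R_mon.
apply: span_bind (span_R _ span_hx) _ => v [v' [[i hi ->] ->]].
case: i hi => [|[|i]] hi.
- by apply: span_mon; left.
- apply: (span_eq (p := L [:: lx] (mon (lh :: nseq a lx)))); first by move=> w; rewrite L_mon.
  by apply: span_mono (span_L _ IH) => w [v'' [[->|->] ->]]; [left|right].
- exfalso; move: hi hf; lia.
Qed.

Lemma span_hix i a : Span (fun v => exists2 j, (j <= i)%N & v = nseq a lx ++ nseq j lh)
  (mon (nseq i lh ++ nseq a lx)).
Proof.
elim: i => [|i IH]; first by apply: span_mon; exists 0 => //; rewrite cats0.
apply: (span_eq (p := L [:: lh] (mon (nseq i lh ++ nseq a lx)))); first by move=> w; rewrite L_mon.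
apply: span_bind (span_L _ IH) _ => v [v' [[j hj ->] ->]].
apply: (span_eq (p := R (nseq j lh) (mon (lh :: nseq a lx)))); first by move=> w; rewrite R_mon.
apply: span_bind (span_R _ (span_hxa a)) _ => v2 [v'' [[->|->] ->]]; apply: span_mon.
- by exists j => //; apply: leqW.
- by exists j.+1 => //; rewrite -catA.
Qed.

Lemma span_yhb b : Span (fun v => exists2 j, (j <= b)%N & v = nseq j lh ++ [:: ly])
  (mon (ly :: nseq b lh)).
Proof.
elim: b => [|b IH]; first by apply: span_mon; exists 0.
apply: (span_eq (p := R [:: lh] (mon (ly :: nseq b lh)))).
  by move=> w; rewrite R_mon nseqSr.
apply: span_bind (span_R _ IH) _ => v [v' [[j hj ->] ->]].
apply: (span_eq (p := L (nseq j lh) (mon [:: ly; lh]))); first by move=> w; rewrite L_mon -catA.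
apply: span_bind (span_L _ span_yh) _ => v2 [v'' [[i hi ->] ->]]; apply: span_mon.
exists (j + i); first by move: hi hf hj; lia.
by rewrite nseqD catA.
Qed.

Lemma span_yxa a : Span (fun v => v = nseq a lx ++ [:: ly] \/
   exists2 i, (i < size g)%N & (0 < a)%N /\ v = nseq a.-1 lx ++ nseq i lh)
  (mon (ly :: nseq a lx)).
Proof.
elim: a => [|a IH]; first by apply: span_mon; left.
apply: (span_eq (p := R (nseq a lx) (mon [:: ly; lx]))); first by move=> w; rewrite R_mon.
apply: span_bind (span_R _ span_yx) _ => v [v' [[->|[i hi ->]] ->]].
  apply: (span_eq (p := L [:: lx] (mon (ly :: nseq a lx)))); first by move=> w; rewrite L_mon.
  apply: span_mono (span_L _ IH) => w [v'' [[->|[i hi [ha ->]]] ->]]; first by left.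
  by right; exists i => //; split => //; case: a ha IH.
apply: span_mono (span_hix i a) => w [j hj ->]; right; exists j; first by move: hj hi; lia.
by split.
Qed.

Definition NF (D W : nat) (v : word) :=
  exists a b c, v = nseq a lx ++ nseq b lh ++ nseq c ly /\ (D * a + b + D * c <= W)%N.

Lemma span_nf w : Span (NF (size g).+1 ((size g).+1 * size w)) (mon w).
Proof.
set D := (size g).+1.
elim: w => [|l w IH]; first by apply: span_mon; exists 0, 0, 0; rewrite muln0.
apply: (span_eq (p := L [:: l] (mon w))); first by move=> v; rewrite L_mon.
apply: span_bind (span_L _ IH) _ => v [v' [[a [b [c [-> hw]]]] ->]] /=.
have hD : (0 < D)%N by [].
case: (case3 l) => [->|[->|->]].
- apply: span_mon; exists a.+1, b, c; split => //; move: hw; rewrite !mulnS; lia.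
- apply: (span_eq (p := R (nseq b lh ++ nseq c ly) (mon (ly :: nseq a lx)))).
    by move=> u; rewrite R_mon.
  apply: span_bind (span_R _ (span_yxa a)) _ => v2 [v0 [[->|[i hi [ha ->]]] ->]].
    apply: (span_eq (p := L (nseq a lx) (R (nseq c ly) (mon (ly :: nseq b lh))))).
      by move=> u; rewrite (L_ext _ _ (fun u => R_mon _ _ _ u)) L_mon -catA.
    apply: span_bind (span_L _ (span_R _ (span_yhb b))) _ => v3 [v1 [[v4 [[j hj ->] ->]] ->]].
    apply: span_mon; exists a, j, c.+1; split; first by rewrite -catA.
    move: hw hj; rewrite !mulnS; lia.
  apply: span_mon; exists a.-1, (i + b), c; split; first by rewrite nseqD !catA.
  case: a ha hw => // a _; rewrite /= !mulnS; move: hi; rewrite -/D; lia.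
- apply: (span_eq (p := R (nseq b lh ++ nseq c ly) (mon (lh :: nseq a lx)))).
    by move=> u; rewrite R_mon.
  apply: span_bind (span_R _ (span_hxa a)) _ => v2 [v0 [[->|->] ->]]; apply: span_mon.
    by exists a, b, c; split => //; move: hw; rewrite mulnS; lia.
  by exists a, b.+1, c; split; [rewrite -catA | move: hw; rewrite mulnS; lia].
Qed.

End Rewr.
Section Upper.
Variable F : fieldType.
Variables (q : F) (f g : {poly F}).
Local Notation mon := (mon F).
Local Notation J := (J q f g).
Local Notation Span := (Span q f g).

Lemma NF_mono D W1 W2 v : (W1 <= W2)%N -> NF D W1 v -> NF D W2 v.
Proof. move=> h [a [b [c [-> hw]]]]; exists a, b, c; split => //; exact: leq_trans hw h. Qed.

Lemma lx_ly : (lx == ly) = false. Proof. by apply/negbTE/negP => /eqP/(congr1 val); rewrite vlx vly. Qed.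
Lemma lx_lh : (lx == lh) = false. Proof. by apply/negbTE/negP => /eqP/(congr1 val); rewrite vlx vlh. Qed.
Lemma ly_lh : (ly == lh) = false. Proof. by apply/negbTE/negP => /eqP/(congr1 val); rewrite vly vlh. Qed.

Section NW.
Variable W : nat.
Definition TT := ('I_W.+1 * 'I_W.+1 * 'I_W.+1)%type.
Definition nw (t : TT) : word := nseq t.1.1 lx ++ nseq t.1.2 lh ++ nseq t.2 ly.

Lemma nw_inj : injective nw.
Proof.
move=> [[a b] c] [[a' b'] c'] e.
have cx := congr1 (count (pred1 lx)) e; have ch := congr1 (count (pred1 lh)) e.
have cy := congr1 (count (pred1 ly)) e.
move: cx ch cy; rewrite /nw /= !count_cat !count_nseq /= !eqxx.
rewrite [ly == lx]eq_sym [lh == lx]eq_sym [lh == ly]eq_sym lx_ly lx_lh ly_lh /=.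
rewrite !mul0n !mul1n !add0n !addn0 => /val_inj -> /val_inj -> /val_inj ->.
done.
Qed.

Lemma NF_nw D v : (0 < D)%N -> NF D W v -> exists t, v = nw t.
Proof.
move=> hD [a [b [c [-> hw]]]].
have ha : (a < W.+1)%N by rewrite ltnS; apply: leq_trans hw; nia.
have hb : (b < W.+1)%N by rewrite ltnS; apply: leq_trans hw; nia.
have hc : (c < W.+1)%N by rewrite ltnS; apply: leq_trans hw; nia.
by exists (Ordinal ha, Ordinal hb, Ordinal hc).
Qed.

Definition Acoef (s : seq (F * word)) (j : 'I_#|{: TT}|) : F :=
  \sum_(t <- s) t.1 * (t.2 == nw (enum_val j))%:R.

Lemma lin_decomp (s : seq (F * word)) w :
  (forall t, t \in s -> exists tau, t.2 = nw tau) ->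
  lin s w = \sum_(j < #|{: TT}|) Acoef s j * mon (nw (enum_val j)) w.
Proof.
elim: s => [|t s IH] hs.
  by rewrite /lin big_nil big1 // => j _; rewrite /Acoef big_nil mul0r.
have e : lin (t :: s) w = t.1 * mon t.2 w + lin s w by rewrite /lin big_cons.
rewrite e IH; last by move=> t' ht'; apply: hs; rewrite inE ht' orbT.
rewrite /Acoef; under [in RHS]eq_bigr => j _ do rewrite big_cons mulrDl.
rewrite big_split /=; congr (_ + _).
have [tau etau] := hs t (mem_head _ _).
rewrite (bigD1 (enum_rank tau)) //= enum_rankK etau eqxx mulr1 big1 ?addr0 // => j hj.
case: eqP; last by rewrite mulr0 mul0r.
by move/nw_inj => e2; move: hj; rewrite e2 enum_valK eqxx.
Qed.

End NW.

Lemma indep_le (hf : (size f <= 2)%N) n k :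
  indep_words q f g n k -> (k <= ((size g).+1 * n).+1 ^ 3)%N.
Proof.
move=> [ws [hsz hind]].
set D := (size g).+1; set W := (D * n)%N.
have hsp : forall i : 'I_k, Span (NF D W) (mon (tnth ws i)).
  move=> i; apply: span_mono (@span_nf F q f g hf (tnth ws i)) => v; apply: NF_mono.
  by rewrite leq_mul2l hsz orbT.
pose S i := projT1 (cid (hsp i)).
have hS i : (forall t, t \in S i -> NF D W t.2) /\ J (fun w => mon (tnth ws i) w - lin (S i) w).
  exact: (projT2 (cid (hsp i))).
have hcard : #|{: TT W}| = (W.+1 ^ 3)%N.
  by rewrite !card_prod !card_ord !expnS expn0 muln1 mulnA.
rewrite -hcard leqNgt; apply/negP => hk.
pose Am : 'M[F]_(k, #|{: TT W}|) := \matrix_(i, j) Acoef (S i) j.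
pose K := kermx Am.
have hK : K != 0.
  apply/negP => /eqP hK0.
  have := mxrank_ker Am; rewrite -/K hK0 mxrank0 => /esym /eqP; rewrite subn_eq0 => hr.
  have := leq_trans hr (rank_leq_col Am); rewrite leqNgt hk //.
have [i0 [j0 hij]] : exists i0 j0, K i0 j0 != 0.
  case: (pselect (exists i0 j0, K i0 j0 != 0)) => // hno.
  exfalso; move/eqP: hK; apply; apply/matrixP => i j; rewrite [RHS]mxE.
  by apply/eqP/negPn/negP => h; apply: hno; exists i, j.
pose c i := K i0 i.
have hKA : forall j : 'I_#|{: TT W}|, \sum_(i < k) c i * Acoef (S i) j = 0.
  move=> j; have := congr1 (fun M : 'M[F]_(k, #|{: TT W}|) => M i0 j) (mulmx_ker Am); rewrite /= -/K !mxE => e.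
  rewrite -[RHS]e; apply: eq_bigr => i _; by rewrite /Am [X in _ = _ * X]mxE.
have hI : in_qgh_ideal q f g (fun w => \sum_(i < k) c i * mon (tnth ws i) w).
  apply/J_ideal.
  have hJ := @J_sumseq F q f g _ (index_enum 'I_k)
     (fun i w => c i * (mon (tnth ws i) w - lin (S i) w)) (fun i => @JZ F q f g (c i) _ (hS i).2).
  apply: J_ext hJ _ => w /=.
  under eq_bigr => i1 _ do rewrite mulrBr.
  rewrite sumrB; suff -> : \sum_(i1 < k) c i1 * lin (S i1) w = 0 by rewrite subr0.
  rewrite (eq_bigr (fun i => c i * \sum_(j < #|{: TT W}|) Acoef (S i) j * mon (nw (enum_val j)) w)); last first.
    move=> i _; rewrite (@lin_decomp W) // => t /(hS i).1 h; by apply: (NF_nw _ h).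
  rewrite (eq_bigr (fun i => \sum_(j < #|{: TT W}|) c i * Acoef (S i) j * mon (nw (enum_val j)) w)); last first.
    by move=> i _; rewrite mulr_sumr; apply: eq_bigr => j _; rewrite mulrA.
  rewrite exchange_big /= big1 // => j _; by rewrite -mulr_suml hKA mul0r.
move: hij; rewrite -/(c j0) (hind c hI j0) eqxx //.
Qed.

End Upper.
Section Mod.
Variable F : fieldType.
Variables (q : F) (f g : {poly F}).
Local Notation rel := (qgh_rel q f g).
Local Notation mon := (mon F).

Definition MM := (nat * nat -> {poly F}).

Fixpoint uu (a : nat) : {poly F} := if a is a'.+1 then f \Po uu a' else 'X.
Fixpoint ss (a : nat) : {poly F} := if a is a'.+1 then g \Po uu a' + q *: ss a' else 0.

Lemma uu_comp a : uu a \Po f = uu a.+1.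
Proof.
elim: a => [|a IH] /=; first by rewrite comp_polyX comp_polyXr.
by rewrite -comp_polyA IH.
Qed.

Lemma addME (m1 m2 : MM) ac : (m1 + m2) ac = m1 ac + m2 ac. Proof. by []. Qed.
Lemma scaleME (k : F) (m : MM) ac : (k *: m) ac = k *: m ac. Proof. by []. Qed.
Lemma zeroME ac : (0 : MM) ac = 0. Proof. by []. Qed.

Definition Xop (m : MM) : MM := fun ac => if ac.1 is a.+1 then m (a, ac.2) else 0.
Definition Hop (m : MM) : MM := fun ac => uu ac.1 * m ac.
Definition Yop (m : MM) : MM := fun ac =>
  (if ac.2 is c.+1 then q ^+ ac.1 *: (m (ac.1, c) \Po f) else 0) + ss ac.1.+1 * m (ac.1.+1, ac.2).

Definition act (l : 'I_3) : MM -> MM :=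
  if val l == 0%N then Xop else if val l == 1%N then Yop else Hop.
Definition ev (w : word) (m : MM) : MM := foldr act m w.

Lemma act_lx : act lx = Xop. Proof. by rewrite /act vlx. Qed.
Lemma act_ly : act ly = Yop. Proof. by rewrite /act vly. Qed.
Lemma act_lh : act lh = Hop. Proof. by rewrite /act vlh. Qed.

Lemma ev_cat a b m : ev (a ++ b) m = ev a (ev b m).
Proof. by rewrite /ev foldr_cat. Qed.
Lemma ev_nseq n l m : ev (nseq n l) m = iter n (act l) m.
Proof. by elim: n => //= n ->. Qed.

Lemma sumM (I : Type) (s : seq I) (G : I -> MM) ac :
  (\sum_(i <- s) G i) ac = \sum_(i <- s) G i ac.
Proof. elim: s => [|i s IH]; by rewrite ?big_nil ?big_cons //= -IH. Qed.

Lemma act_add l : {morph act l : m1 m2 / m1 + m2}.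
Proof.
move=> m1 m2; apply: funext => [[a c]].
case: (case3 l) => [->|[->|->]]; rewrite ?act_lx ?act_ly ?act_lh /=.
- by rewrite /Xop /= !addME /=; case: a => [|a] //=; rewrite addr0.
- rewrite /Yop /= !addME /= mulrDr; case: c => [|c] /=; first by rewrite !add0r.
  by rewrite comp_polyD scalerDr addrACA.
- by rewrite /Hop /= !addME mulrDr.
Qed.
Lemma act0 l : act l 0 = 0.
Proof.
apply: funext => [[a c]].
case: (case3 l) => [->|[->|->]]; rewrite ?act_lx ?act_ly ?act_lh /=.
- by rewrite /Xop /= zeroME; case: a.
- by rewrite /Yop /= !zeroME mulr0 addr0; case: c => //= c; rewrite comp_poly0 scaler0.
- by rewrite /Hop /= !zeroME mulr0.
Qed.
Lemma act_scale l (k : F) m : act l (k *: m) = k *: act l m.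
Proof.
apply: funext => [[a c]].
case: (case3 l) => [->|[->|->]]; rewrite ?act_lx ?act_ly ?act_lh /=.
- by rewrite /Xop /= !scaleME; case: a => [|a] //=; rewrite scaler0.
- rewrite /Yop /= !scaleME scalerDr scalerAr; congr (_ + _); case: c => [|c] /=; first by rewrite scaler0.
  by rewrite comp_polyZ !scalerA mulrC.
- by rewrite /Hop /= !scaleME scalerAr.
Qed.

Lemma ev_sum w (I : Type) (s : seq I) (G : I -> MM) :
  ev w (\sum_(i <- s) G i) = \sum_(i <- s) ev w (G i).
Proof.
elim: w => [|l w IH] //=; rewrite IH.
exact: (big_morph (act l) (act_add l) (act0 l)).
Qed.
Lemma ev_scale w (k : F) m : ev w (k *: m) = k *: ev w m.
Proof. by elim: w => [|l w IH] //=; rewrite IH act_scale. Qed.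
Lemma ev0 w : ev w 0 = 0.
Proof. by elim: w => [|l w IH] //=; rewrite IH act0. Qed.

Fixpoint allw (N : nat) : seq word :=
  if N is N'.+1 then [::] :: [seq l :: w | l <- enum 'I_3, w <- allw N'] else [:: [::]].

Lemma mem_allw N w : (w \in allw N) = (size w <= N)%N.
Proof.
elim: N w => [|N IH] w; first by rewrite inE leqn0 size_eq0.
case: w => [|l w]; first by rewrite inE eqxx.
rewrite inE /= ltnS -IH; apply/allpairsP/idP => [[[l' w'] [_ /= hw [e1 e2]]]|hw]; first by rewrite e2.
by exists (l, w); rewrite mem_enum.
Qed.

Lemma uniq_allw N : uniq (allw N).
Proof.
elim: N => [|N IH] //=; apply/andP; split.
  by apply/negP => /allpairsP[[l' w'] [_ _]].
apply: allpairs_uniq => //; first exact: enum_uniq.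
by move=> [l1 w1] [l2 w2] _ _ /= [-> ->].
Qed.

Lemma sum_reindex (V : nmodType) (I : eqType) (s : seq I) (gm : I -> word) N (Fn : word -> V) :
  uniq s -> {in s &, injective gm} -> (forall i, i \in s -> size (gm i) <= N)%N ->
  (forall w, (size w <= N)%N -> Fn w != 0 -> exists2 i, i \in s & w = gm i) ->
  \sum_(w <- allw N) Fn w = \sum_(i <- s) Fn (gm i).
Proof.
move=> us ig hs hF.
rewrite (bigID (fun w => w \in map gm s)) /= [X in _ + X]big_seq_cond [X in _ + X]big1 ?addr0; last first.
  move=> w /andP[hw hn]; apply/eqP; apply/negPn/negP => hnz.
  have hsz : (size w <= N)%N by rewrite -mem_allw.
  have [i hi e] := hF w hsz hnz.
  by move: hn; rewrite e map_f.
rewrite -big_filter -(big_map gm xpredT); apply: perm_big; apply: uniq_perm.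
- exact/filter_uniq/uniq_allw.
- by rewrite map_inj_in_uniq.
move=> w; rewrite mem_filter; apply/andP/idP => [[] //|hw]; split => //.
by move: hw => /mapP[i hi ->]; rewrite mem_allw hs.
Qed.

Arguments sum_reindex {V I} s gm N Fn _ _ _ _.

Lemma subME (m1 m2 : MM) ac : (m1 - m2) ac = m1 ac - m2 ac. Proof. by []. Qed.

Section Sums.
Variable Phi : word -> MM.

Lemma SUM_L (p : nser F) a N : (size a <= N)%N ->
  \sum_(w <- allw N) L a p w *: Phi w = \sum_(v <- allw (N - size a)) p v *: Phi (a ++ v).
Proof.
move=> ha; rewrite (sum_reindex (allw (N - size a)) (cat a)).
- by apply: eq_bigr => v _; rewrite L_cat.
- exact: uniq_allw.
- by move=> v1 v2 _ _ /catsI.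
- by move=> v; rewrite mem_allw size_cat -leq_subRL.
- move=> w hw; case: (preP a w) => [[v e] _|nh]; last by rewrite L_out // scale0r eqxx.
  exists v; last exact: e.
  by rewrite mem_allw; move: hw; rewrite e size_cat -leq_subRL.
Qed.

Lemma SUM_R (p : nser F) b N : (size b <= N)%N ->
  \sum_(w <- allw N) R b p w *: Phi w = \sum_(v <- allw (N - size b)) p v *: Phi (v ++ b).
Proof.
move=> hb; rewrite (sum_reindex (allw (N - size b)) (fun v => v ++ b)).
- by apply: eq_bigr => v _; rewrite R_cat.
- exact: uniq_allw.
- by move=> v1 v2 _ _ /catIs.
- by move=> v; rewrite mem_allw size_cat addnC -leq_subRL.
- move=> w hw; case: (sufP b w) => [[v e] _|nh]; last by rewrite R_out // scale0r eqxx.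
  exists v; last exact: e.
  by rewrite mem_allw; move: hw; rewrite e size_cat addnC -leq_subRL.
Qed.

Lemma SUM_mon v N : (size v <= N)%N -> \sum_(w <- allw N) mon v w *: Phi w = Phi v.
Proof.
move=> hv.
have u1 : uniq [:: v] by [].
have i1 : {in [:: v] &, injective (@id word)} by move=> x y _ _.
have s1 : forall i, i \in [:: v] -> (size (@id word i) <= N)%N by move=> i; rewrite inE => /eqP ->.
have h1 : forall w, (size w <= N)%N -> mon v w *: Phi w != 0 -> exists2 i, i \in [:: v] & w = @id word i.
  move=> w _; rewrite monE; case: (eqVneq w v) => [->|ne]; last by rewrite scale0r eqxx.
  by exists v; rewrite ?inE.
rewrite (sum_reindex [:: v] id N _ u1 i1 s1 h1).
by rewrite big_cons big_nil addr0 monE eqxx scale1r.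
Qed.

Lemma SUM_pol (p : {poly F}) N :
  \sum_(w <- allw N) pol_h p w *: Phi w = \sum_(i < N.+1) p`_i *: Phi (nseq i lh).
Proof.
rewrite (sum_reindex (index_iota 0 N.+1) (fun i => nseq i lh)) ?big_mkord.
- by apply: eq_bigr => i _; rewrite /pol_h all_nseq eqxx orbT size_nseq.
- exact: iota_uniq.
- by move=> i j _ _ /(congr1 size); rewrite !size_nseq.
- by move=> i; rewrite mem_index_iota size_nseq; lia.
- move=> w hw; rewrite /pol_h; case: ifP => ha; last by rewrite scale0r eqxx.
  move=> _; exists (size w); first by rewrite mem_index_iota; lia.
  exact/all_pred1P.
Qed.

Lemma SUM_B (p r : nser F) N :
  \sum_(w <- allw N) (p w - r w) *: Phi w =
  \sum_(w <- allw N) p w *: Phi w - \sum_(w <- allw N) r w *: Phi w.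
Proof. by rewrite -sumrB; apply: eq_bigr => w _; rewrite scalerBl. Qed.

Lemma SUM_Z c (p : nser F) N :
  \sum_(w <- allw N) (c * p w) *: Phi w = c *: \sum_(w <- allw N) p w *: Phi w.
Proof. by rewrite scaler_sumr; apply: eq_bigr => w _; rewrite scalerA. Qed.
End Sums.

Lemma act_sumZ l (s : seq word) (c : word -> F) (Phi : word -> MM) :
  \sum_(v <- s) c v *: act l (Phi v) = act l (\sum_(v <- s) c v *: Phi v).
Proof.
rewrite (big_morph (act l) (act_add l) (act0 l)); apply: eq_bigr => v _; by rewrite act_scale.
Qed.

Lemma ev_sumZ a (s : seq word) (c : word -> F) (Phi : word -> MM) :
  \sum_(v <- s) c v *: ev a (Phi v) = ev a (\sum_(v <- s) c v *: Phi v).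
Proof. by rewrite ev_sum; apply: eq_bigr => v _; rewrite ev_scale. Qed.

Definition fH (p : {poly F}) (m : MM) : MM := fun ac => (p \Po uu ac.1) * m ac.

Lemma iterH i m : iter i Hop m = fun ac => uu ac.1 ^+ i * m ac.
Proof.
elim: i => [|i IH] /=; first by apply: funext => ac; rewrite expr0 mul1r.
by rewrite IH; apply: funext => ac; rewrite /Hop exprS mulrA.
Qed.

Lemma polH (p : {poly F}) N m : (size p <= N.+1)%N ->
  \sum_(i < N.+1) p`_i *: ev (nseq i lh) m = fH p m.
Proof.
move=> hp; apply: funext => ac; rewrite sumM /fH.
under eq_bigr => i _ do rewrite scaleME ev_nseq act_lh iterH /= scalerAl.
rewrite -mulr_suml; congr (_ * _).
rewrite comp_polyE [RHS](big_ord_widen N.+1 (fun i => p`_i *: uu ac.1 ^+ i)) // [RHS]big_mkcond /=.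
apply: eq_bigr => i _; case: ltnP => // h; by rewrite nth_default // scale0r.
Qed.

Lemma kill k N m : (size f + size g + 2 <= N)%N ->
  \sum_(w <- allw N) rel k w *: ev w m = 0.
Proof.
move=> hN; have hf1 : (size f <= N - 1)%N by lia.
have hg1 : (size g <= N)%N by lia.
case: (case3 k) => [->|[->|->]].
- rewrite /qgh_rel vlx /= /nsub nmul_monl SUM_B SUM_mon; last by rewrite /=; lia.
  rewrite SUM_L; last by rewrite /=; lia.
  rewrite (eq_bigr (fun v => pol_h f v *: act lx (ev v m))) // (act_sumZ lx).
  rewrite (SUM_pol (fun v => ev v m)) polH; last by rewrite /=; apply: leqW.
  rewrite /= act_lh act_lx; apply: funext => [[a c]].
  rewrite subME zeroME /Hop /Xop /fH /=; case: a => [|a] /=; first by rewrite mulr0 subrr.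
  by rewrite subrr.
- rewrite /qgh_rel vly /= /nsub nmul_monr SUM_B SUM_mon; last by rewrite /=; lia.
  rewrite SUM_R; last by rewrite /=; lia.
  rewrite (eq_bigr (fun v => pol_h f v *: ev v (Yop m))); last first.
    by move=> v _; rewrite ev_cat /= act_ly.
  rewrite (SUM_pol (fun v => ev v (Yop m))) polH; last by rewrite /=; apply: leqW.
  rewrite /= act_lh act_ly; apply: funext => [[a c]].
  rewrite subME zeroME /Hop /Yop /fH /=.
  case: c => [|c] /=; last rewrite comp_polyM uu_comp /=; rewrite -?mul_polyC; ring.
- rewrite /qgh_rel vlh /= /nsub /nscale SUM_B SUM_B SUM_Z !SUM_mon; try by rewrite /=; lia.
  rewrite (SUM_pol (fun v => ev v m)) polH; last by apply: leqW.
  rewrite /= act_lx act_ly; apply: funext => [[a c]].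
  rewrite !subME scaleME zeroME /Xop /Yop /fH /=.
  case: a => [|a]; case: c => [|c] /=; rewrite ?comp_poly0 ?scaler0 ?exprS -?mul_polyC ?polyCM; ring.
Qed.

Lemma ideal_zero k (c : 'I_k -> F) (ws : k.-tuple word) m :
  in_qgh_ideal q f g (fun w => \sum_(i < k) c i * mon (tnth ws i) w) ->
  \sum_(i < k) c i *: ev (tnth ws i) m = 0.
Proof.
move=> /J_ideal [s hs].
set B := (size f + size g + 2)%N.
set N1 := (\max_(i < k) size (tnth ws i))%N.
set N2 := (\max_(t <- s) (size t.1.1.2 + size t.2))%N.
set N := (B + N1 + N2)%N.
have e : \sum_(w <- allw N) (\sum_(i < k) c i * mon (tnth ws i) w) *: ev w m =
         \sum_(w <- allw N) (\sum_(t <- s) sand q f g t w) *: ev w m.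
  by apply: eq_bigr => w _; rewrite hs.
move: e.
under eq_bigr => w _ do rewrite scaler_suml.
rewrite exchange_big /=.
under eq_bigr => i _ do rewrite (SUM_Z (fun w => ev w m)).
under [in RHS]eq_bigr => w _ do rewrite scaler_suml.
rewrite [in RHS]exchange_big /=.
have e1 : \sum_(i < k) c i *: ev (tnth ws i) m =
    \sum_(i < k) c i *: \sum_(w <- allw N) mon (tnth ws i) w *: ev w m.
  apply: eq_bigr => i _; rewrite SUM_mon //.
  have := @leq_bigmax _ (fun i => size (tnth ws i)) i; rewrite -/N1 /N; lia.
rewrite e1 => ->.
rewrite big_seq big1 // => t ht.
rewrite /sand SUM_Z SUM_R; last first.
  have := @leq_bigmax_seq _ s xpredT (fun t : F * word * 'I_3 * word => (size t.1.1.2 + size t.2)%N) t ht (erefl true).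
  rewrite -/N2 /N; lia.
rewrite SUM_L; last first.
  have := @leq_bigmax_seq _ s xpredT (fun t : F * word * 'I_3 * word => (size t.1.1.2 + size t.2)%N) t ht (erefl true).
  rewrite -/N2 /N; lia.
rewrite (eq_bigr (fun z => rel t.1.2 z *: ev t.1.1.2 (ev z (ev t.2 m)))); last first.
  by move=> z _; rewrite !ev_cat.
rewrite ev_sumZ kill ?ev0 ?scaler0 //.
have := @leq_bigmax_seq _ s xpredT (fun t : F * word * 'I_3 * word => (size t.1.1.2 + size t.2)%N) t ht (erefl true).
rewrite -/N2 /N; lia.
Qed.

Definition dv (p : nat * nat) (P : {poly F}) : MM := fun ac => if ac == p then P else 0.
Definition e0 : MM := dv (0%N, 0%N) 1.

Lemma Xop_dv a c P : Xop (dv (a, c) P) = dv (a.+1, c) P.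
Proof.
apply: funext => [[a' c']]; rewrite /Xop /dv /=.
case: a' => [|a'] //=; by rewrite !xpair_eqE.
Qed.

Lemma Hop_dv a c P : Hop (dv (a, c) P) = dv (a, c) (uu a * P).
Proof.
apply: funext => [[a' c']]; rewrite /Hop /dv /=.
case: eqP => [e|_]; last by rewrite mulr0.
have -> : a' = a by move: e => [].
done.
Qed.

Lemma Yop_dv0 c P : Yop (dv (0%N, c) P) = dv (0%N, c.+1) (P \Po f).
Proof.
apply: funext => [[a' c']]; rewrite /Yop /dv /=.
rewrite mulr0 addr0; case: c' => [|c'] /=; first by rewrite xpair_eqE /= andbF.
rewrite !xpair_eqE eqSS; case: (eqVneq a' 0%N) => [->|ha] /=.
  by rewrite expr0 scale1r; case: (c' == c) => //=; rewrite comp_poly0.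
by rewrite ?(negbTE ha) /= comp_poly0 scaler0.
Qed.

Lemma iterY c : iter c Yop e0 = dv (0%N, c) 1.
Proof. elim: c => [|c IH]; first by []. by rewrite /= IH Yop_dv0 -polyC1 comp_polyC. Qed.
Lemma iterHd b a c P : iter b Hop (dv (a, c) P) = dv (a, c) (uu a ^+ b * P).
Proof.
elim: b => [|b IH] /=; first by rewrite expr0 mul1r.
by rewrite IH Hop_dv exprS mulrA.
Qed.
Lemma iterXd n a c P : iter n Xop (dv (a, c) P) = dv ((a + n)%N, c) P.
Proof. elim: n => [|n IH]; first by rewrite addn0. by rewrite /= IH Xop_dv addnS. Qed.

Definition wdd (a j mm b c : nat) : word :=
  nseq a lx ++ nseq j lh ++ nseq mm lx ++ nseq b lh ++ nseq c ly.

Lemma ev_wdd a j mm b c : ev (wdd a j mm b c) e0 = dv ((mm + a)%N, c) (uu mm ^+ j * 'X^b).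
Proof.
rewrite /wdd !ev_cat !ev_nseq act_lx act_lh act_ly iterY iterHd /= mulr1 iterXd add0n.
by rewrite iterHd iterXd.
Qed.

Lemma size_wdd a j mm b c : size (wdd a j mm b c) = (a + j + mm + b + c)%N.
Proof. by rewrite /wdd !size_cat !size_nseq !addnA. Qed.

Lemma dv_indep (I : finType) (pos : I -> nat * nat) (P : I -> {poly F}) (c : I -> F) :
  (forall i, P i != 0) -> (forall i j, pos i = pos j -> size (P i) = size (P j) -> i = j) ->
  \sum_i c i *: dv (pos i) (P i) = 0 -> forall i, c i = 0.
Proof.
move=> hP hinj hsum.
have hpos : forall p, \sum_(i | pos i == p) c i *: P i = 0.
  move=> p; have := congr1 (fun m : MM => m p) hsum; rewrite sumM zeroME => e.
  rewrite -[RHS]e big_mkcond; apply: eq_bigr => i _; rewrite scaleME /dv eq_sym.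
  by case: ifP; rewrite ?scaler0.
move=> i; apply/eqP; apply/negPn/negP => hci.
pose S := fun j => (pos j == pos i) && (c j != 0).
have hSi : S i by rewrite /S eqxx hci.
case: (arg_maxnP (fun j => size (P j)) hSi) => j0 /andP[/eqP hj0 hcj0] hmax.
have := congr1 (fun p : {poly F} => p`_(size (P j0)).-1) (hpos (pos i)).
rewrite coef_sum coef0 (bigD1 j0) /=; last by rewrite hj0.
rewrite big1 ?addr0; last first.
  move=> j /andP[hj hne]; rewrite coefZ.
  case: (eqVneq (c j) 0) => [->|hcj]; first by rewrite mul0r.
  have hSj : S j by rewrite /S hj hcj.
  have hle := hmax j hSj.
  have hneq : size (P j) != size (P j0).
    apply/negP => /eqP e; move: hne; rewrite (hinj j j0) ?eqxx //.
    by rewrite hj0; apply/eqP.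
  rewrite nth_default ?mulr0 //.
  have hp0 : (0 < size (P j0))%N by rewrite size_poly_gt0.
  have hlt : (size (P j) < size (P j0))%N by rewrite ltn_neqAle hneq; exact: hle.
  by rewrite -ltnS prednK.
rewrite coefZ -/(lead_coef (P j0)) => /eqP; rewrite mulf_eq0 lead_coef_eq0 (negbTE hcj0) /=.
by rewrite (negbTE (hP j0)).
Qed.

Lemma growth_lower n (T : finType) (wd : T -> word) (pos : T -> nat * nat) (P : T -> {poly F}) :
  (forall t, size (wd t) <= n)%N -> (forall t, ev (wd t) e0 = dv (pos t) (P t)) ->
  (forall t, P t != 0) -> (forall t t', pos t = pos t' -> size (P t) = size (P t') -> t = t') ->
  (#|T| <= 3 ^ n.+1)%N -> (#|T| <= qgh_growth q f g n)%N.
Proof.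
move=> hsz hev hP hinj hT.
set k := #|T|.
pose ws : k.-tuple word := [tuple wd (enum_val i) | i < k].
have hind : indep_words q f g n k.
  exists ws; split; first by move=> i; rewrite tnth_mktuple.
  move=> c hI.
  have h0 := ideal_zero e0 hI.
  have h1 : \sum_(i < k) c i *: dv (pos (enum_val i)) (P (enum_val i)) = 0.
    by rewrite -[RHS]h0; apply: eq_bigr => i _; rewrite tnth_mktuple hev.
  apply: (dv_indep (pos := fun i => pos (enum_val i)) (P := fun i => P (enum_val i))) h1.
    by move=> i; exact: hP.
  by move=> i j hp hs; apply: enum_val_inj; apply: hinj.
have hk : (k < (3 ^ n.+1).+1)%N by rewrite ltnS.
rewrite /qgh_growth.
exact: (@leq_bigmax_cond _ (fun i : 'I_(3 ^ n.+1).+1 => `[< indep_words q f g n i >])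
   (fun i => nat_of_ord i) (Ordinal hk) (asboolT hind)).
Qed.

End Mod.
Section Bounds.
Variable F : fieldType.
Variables (q : F) (f g : {poly F}).

Lemma growth_upper (hf : (size f <= 2)%N) n :
  (qgh_growth q f g n <= ((size g).+1 * n).+1 ^ 3)%N.
Proof. rewrite /qgh_growth; apply/bigmax_leqP => i /asboolP hi; exact: (@indep_le F q f g hf n i hi). Qed.

Lemma pow_bound m e n : (0 < e)%N -> (e * m <= n.+1)%N -> (m ^ e <= 3 ^ n.+1)%N.
Proof.
move=> he hm; apply: (@leq_trans ((3 ^ m) ^ e)).
  by rewrite leq_exp2r // ltnW // ltn_expl.
by rewrite -expnM leq_exp2l // mulnC.
Qed.

Lemma lower3 n : ((n %/ 3) ^ 3 <= qgh_growth q f g n)%N.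
Proof.
set m := (n %/ 3)%N.
have hm : (m * 3 <= n)%N by rewrite leq_trunc_div.
have hcard : #|{: 'I_m * 'I_m * 'I_m}| = (m ^ 3)%N.
  by rewrite !card_prod !card_ord !expnS expn0 muln1 mulnA.
have h1 : forall t : 'I_m * 'I_m * 'I_m, (size (wdd t.1.1 0 0 t.1.2 t.2) <= n)%N.
  move=> [[a b] c]; rewrite size_wdd /=.
  have := ltn_ord a; have := ltn_ord b; have := ltn_ord c; lia.
have h2 : forall t : 'I_m * 'I_m * 'I_m, ev q f g (wdd t.1.1 0 0 t.1.2 t.2) (e0 F) =
    dv ((0 + t.1.1)%N, nat_of_ord t.2) (uu f 0 ^+ 0 * 'X^(t.1.2)).
  by move=> t; rewrite ev_wdd.
have h3 : forall t : 'I_m * 'I_m * 'I_m, uu f 0 ^+ 0 * 'X^(t.1.2) != 0.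
  by move=> t; rewrite expr0 mul1r -size_poly_eq0 size_polyXn.
have h4 : forall t t' : 'I_m * 'I_m * 'I_m,
    ((0 + t.1.1)%N, nat_of_ord t.2) = ((0 + t'.1.1)%N, nat_of_ord t'.2) ->
    size (uu f 0 ^+ 0 * 'X^(t.1.2)) = size (uu f 0 ^+ 0 * 'X^(t'.1.2)) -> t = t'.
  move=> [[a b] c] [[a' b'] c'] /= [ea ec]; rewrite !expr0 !mul1r !size_polyXn => [[eb]].
  by congr (_, _, _); apply: val_inj.
have h5 : (#|{: 'I_m * 'I_m * 'I_m}| <= 3 ^ n.+1)%N.
  by rewrite hcard; apply: pow_bound => //; lia.
by rewrite -hcard; exact: (growth_lower h1 h2 h3 h4 h5).
Qed.

Hypothesis hf : (2 < size f)%N.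
Let d := (size f).-1.
Lemma d_ge2 : (2 <= d)%N. Proof. by rewrite /d -ltnS prednK // ltnW // ltnW. Qed.

Lemma size_uu k : size (uu f k) = (d ^ k).+1.
Proof.
elim: k => [|k IH]; first by rewrite /= size_polyX expn0.
have e := size_comp_poly f (uu f k); rewrite IH /= -/d in e.
rewrite /=; case E: (size (f \Po uu f k)) e => [|s] /= e.
  by move: e; rewrite expnS; move/esym/eqP; rewrite muln_eq0 expn_eq0 /=; have := d_ge2; case: (d).
by rewrite e expnS.
Qed.

Lemma uu_neq0 k : uu f k != 0.
Proof. by rewrite -size_poly_eq0 size_uu. Qed.

Lemma size_P k j b : size (uu f k ^+ j * 'X^b) = (j * d ^ k + b).+1.
Proof.
rewrite size_mulXn ?expf_neq0 ?uu_neq0 //.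
have e := size_exp (uu f k) j; rewrite size_uu /= in e.
have hn : uu f k ^+ j != 0 by rewrite expf_neq0 ?uu_neq0.
have hp : (0 < size (uu f k ^+ j))%N by rewrite size_poly_gt0.
by rewrite -(prednK hp) e mulnC addnS addnC.
Qed.

Lemma lower4 n : ((n %/ 5) ^ 4 <= qgh_growth q f g n)%N.
Proof.
set m := (n %/ 5)%N.
have hm : (m * 5 <= n)%N by rewrite leq_trunc_div.
have hcard : #|{: 'I_m * 'I_m * 'I_m * 'I_m}| = (m ^ 4)%N.
  by rewrite !card_prod !card_ord !expnS expn0 muln1 !mulnA.
have h1 : forall t : 'I_m * 'I_m * 'I_m * 'I_m, (size (wdd t.1.1.1 t.1.1.2 m t.1.2 t.2) <= n)%N.
  move=> [[[a j] b] c]; rewrite size_wdd /=.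
  have := ltn_ord a; have := ltn_ord b; have := ltn_ord c; have := ltn_ord j; lia.
have h2 : forall t : 'I_m * 'I_m * 'I_m * 'I_m, ev q f g (wdd t.1.1.1 t.1.1.2 m t.1.2 t.2) (e0 F) =
    dv ((m + t.1.1.1)%N, nat_of_ord t.2) (uu f m ^+ t.1.1.2 * 'X^(t.1.2)).
  by move=> t; rewrite ev_wdd.
have h3 : forall t : 'I_m * 'I_m * 'I_m * 'I_m, uu f m ^+ t.1.1.2 * 'X^(t.1.2) != 0.
  move=> t; apply: mulf_neq0; first exact: (expf_neq0 _ (uu_neq0 _)).
  by rewrite -size_poly_eq0 size_polyXn.
have h4 : forall t t' : 'I_m * 'I_m * 'I_m * 'I_m,
    ((m + t.1.1.1)%N, nat_of_ord t.2) = ((m + t'.1.1.1)%N, nat_of_ord t'.2) ->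
    size (uu f m ^+ t.1.1.2 * 'X^(t.1.2)) = size (uu f m ^+ t'.1.1.2 * 'X^(t'.1.2)) -> t = t'.
  move=> [[[a j] b] c] [[[a' j'] b'] c'] /= [ea ec]; rewrite !size_P => [[e]].
  have hD : (m <= d ^ m)%N.
    apply: (@leq_trans (2 ^ m)); first exact/ltnW/ltn_expl.
    case: (m) => [|m'] //; rewrite leq_exp2r //; exact: d_ge2.
  have hb : (b < d ^ m)%N by apply: leq_trans (ltn_ord b) hD.
  have hb' : (b' < d ^ m)%N by apply: leq_trans (ltn_ord b') hD.
  have hD0 : (0 < d ^ m)%N by apply: leq_ltn_trans hb.
  have ej : j = j' :> nat.
    have := congr1 (fun x => x %/ d ^ m)%N e; rewrite /= !divnMDl // !divn_small //.
    by rewrite !addn0.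
  have eb : b = b' :> nat.
    by have := congr1 (fun x => x %% d ^ m)%N e; rewrite /= !modnMDl !modn_small.
  have ea' : a = a' :> nat by move/eqP: ea; rewrite eqn_add2l => /eqP.
  by congr (_, _, _, _); apply: val_inj.
have h5 : (#|{: 'I_m * 'I_m * 'I_m * 'I_m}| <= 3 ^ n.+1)%N.
  by rewrite hcard; apply: pow_bound => //; lia.
by rewrite -hcard; exact: (growth_lower h1 h2 h3 h4 h5).
Qed.

End Bounds.
Import numFieldNormedType.Exports.
Section Analysis.
Variable R : realType.
Local Open Scope classical_set_scope.

Lemma ln_nat_mono (x y : nat) : (x <= y)%N -> ln (x%:R : R) <= ln y%:R.
Proof.
move=> h; case: x h => [|x] h.
  rewrite ln0 //; case: y h => [|y] _; first by rewrite ln0.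
  by apply: ln_ge0; rewrite ler1n.
by rewrite ler_ln ?posrE ?ltr0n ?ler_nat //; apply: leq_trans h.
Qed.

Lemma ln_nat_ge0 (x : nat) : 0 <= ln (x%:R : R).
Proof. by have := ln_nat_mono (leq0n x); rewrite ln0. Qed.

Lemma ln_natM (x y : nat) : (0 < x)%N -> (0 < y)%N -> ln ((x * y)%:R : R) = ln x%:R + ln y%:R.
Proof. by move=> hx hy; rewrite natrM lnM // posrE ltr0n. Qed.

Lemma ln_natX (x e : nat) : (0 < x)%N -> ln ((x ^ e)%:R : R) = e%:R * ln x%:R.
Proof. by move=> hx; rewrite natrX lnXn ?ltr0n // mulr_natl. Qed.

Lemma cvg_ratio (G : nat -> nat) (e c C n0 : nat) :
  (0 < c)%N -> (0 < C)%N ->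
  (forall n, (n0 <= n)%N -> (n ^ e <= c * G n)%N /\ (G n <= C * n ^ e)%N) ->
  (fun n => ln (G n)%:R / ln (n%:R : R)) @ \oo --> (e%:R : R).
Proof.
move=> hc hC hG; apply/cvgrPdist_le => eps heps.
set K : R := ln c%:R + ln C%:R.
set N := Num.Def.archi_bound (expR (K / eps)).
have hN : expR (K / eps) < N%:R by apply: archi_boundP; exact: ltW (expR_gt0 _).
exists (maxn (maxn n0 N) 2) => // n /= hn.
have hn0 : (n0 <= n)%N by move: hn; rewrite !geq_max => /andP[/andP[]].
have hnN : (N <= n)%N by move: hn; rewrite !geq_max => /andP[/andP[]].
have hn2 : (2 <= n)%N by move: hn; rewrite !geq_max => /andP[_].
have [h1 h2] := hG n hn0.
have hne : (0 < n ^ e)%N by rewrite expn_gt0; apply/orP; left; lia.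
have hGpos : (0 < G n)%N by move: h1 hne; case: (G n) => [|k]; rewrite ?muln0 //; lia.
set L := ln (n%:R : R).
have hL : 0 < L by apply: ln_gt0; rewrite ltr1n.
have hc0 := ln_nat_ge0 c; have hC0 := ln_nat_ge0 C.
have hl1 : e%:R * L <= ln c%:R + ln (G n)%:R.
  by rewrite -ln_natX 1?ltnW // -ln_natM //; apply: ln_nat_mono.
have hl2 : ln (G n)%:R <= ln C%:R + e%:R * L.
  by rewrite -ln_natX 1?ltnW // -ln_natM //; apply: ln_nat_mono.
have hNpos : (0 < N)%N by rewrite -(ltr0n R); apply: lt_trans hN; exact: expR_gt0.
have hKL : K <= eps * L.
  rewrite mulrC -ler_pdivrMr //; apply: (@le_trans _ _ (ln N%:R)); last exact: ln_nat_mono.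
  rewrite -[X in X <= _]expRK ler_ln ?posrE ?expR_gt0 ?ltr0n //; exact: ltW.
rewrite (_ : e%:R - ln (G n)%:R / L = (e%:R * L - ln (G n)%:R) / L); last first.
  by field; rewrite gt_eqF.
rewrite normrM normfV (gtr0_norm hL) ler_pdivrMr //.
apply: le_trans hKL; rewrite ler_norml /K; apply/andP; split; lra.
Qed.

Lemma GK_eq (G : nat -> nat) (e c C n0 : nat) :
  (0 < c)%N -> (0 < C)%N ->
  (forall n, (n0 <= n)%N -> (n ^ e <= c * G n)%N /\ (G n <= C * n ^ e)%N) ->
  limn_esup (fun n => ((ln (G n)%:R / ln (n%:R : R)))%:E) = (e%:R : R)%:E.
Proof.
move=> hc hC hG; have h := cvg_ratio hc hC hG.
have h' : (fun n => ((ln (G n)%:R / ln (n%:R : R)))%:E) @ \oo --> (e%:R : R)%:E.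
  by apply: cvg_EFin; [exact: nearW | exact: h].
exact: (cvg_limn_einf_sup h').2.
Qed.

Lemma limn_esup_mono (u v : (\bar R)^nat) : (forall n, u n <= v n)%E -> (limn_esup u <= limn_esup v)%E.
Proof.
move=> huv; rewrite !limn_esup_lim; apply: lee_lim; [exact: is_cvg_esups|exact: is_cvg_esups|].
apply: nearW => n; apply: ge_ereal_sup => _ [k /= hk <-].
by apply: le_ereal_sup_tmp; exists (v k); [exists k | exact: huv].
Qed.

Lemma GK_ge (G : nat -> nat) (e c n0 : nat) :
  (0 < c)%N -> (forall n, (n0 <= n)%N -> (n ^ e <= c * G n)%N) ->
  ((e%:R : R)%:E <= limn_esup (fun n => ((ln (G n)%:R / ln (n%:R : R)))%:E))%E.
Proof.
move=> hc hG.
have hG' : forall n, (n0 <= n)%N -> (n ^ e <= c * minn (G n) (n ^ e))%N /\ (minn (G n) (n ^ e) <= 1 * n ^ e)%N.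
  move=> n hn; split; last by rewrite mul1n geq_minr.
  rewrite /minn; case: ltnP => hle; first exact: hG.
  by rewrite leq_pmull.
rewrite -(GK_eq hc (ltn0Sn 0) hG'); apply: limn_esup_mono => n.
rewrite lee_fin; apply: ler_wpM2r; first by rewrite invr_ge0 ln_nat_ge0.
by apply: ln_nat_mono; exact: geq_minl.
Qed.

End Analysis.
Unset Implicit Arguments.
Theorem proposition2p3 (F : fieldType) (q : F) (f g : {poly F}) :
  (GKdim_qgh q f g = 3%:E <-> (size f <= 2)%N) /\
  ((2 < size f)%N -> (4%:E <= GKdim_qgh q f g)%E).
Proof.
have ge4 : (2 < size f)%N -> (4%:E <= GKdim_qgh q f g)%E.
  move=> hf; rewrite /GKdim_qgh.
  apply: (@GK_ge _ (qgh_growth q f g) 4 (10 ^ 4) 5) => // n hn.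
  have h := @lower4 F q f g hf n.
  set x := (n %/ 5)%N in h *.
  have hx : (n <= 10 * x)%N by have := ltn_ceil n (isT : (0 < 5)%N); rewrite -/x; lia.
  apply: (@leq_trans ((10 * x) ^ 4)); first by rewrite leq_exp2r.
  by rewrite expnMn leq_mul2l h orbT.
have eq3 : (size f <= 2)%N -> GKdim_qgh q f g = 3%:E.
  move=> hf; rewrite /GKdim_qgh.
  apply: (@GK_eq _ (qgh_growth q f g) 3 (6 ^ 3) ((size g).+2 ^ 3) 4) => // n hn; split.
  - have h := @lower3 F q f g n.
    set x := (n %/ 3)%N in h *.
    have hx : (n <= 6 * x)%N by have := ltn_ceil n (isT : (0 < 3)%N); rewrite -/x; lia.
    apply: (@leq_trans ((6 * x) ^ 3)); first by rewrite leq_exp2r.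
    by rewrite expnMn leq_mul2l h orbT.
  - apply: leq_trans (@growth_upper F q f g hf n) _.
    rewrite -expnMn leq_exp2r //; nia.
split; last exact: ge4.
split => [h|]; last exact: eq3.
rewrite leqNgt; apply/negP => hf; have := ge4 hf; by rewrite h lee_fin ler_nat.
Qed.
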